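(* Let $\xi$ be a positive random variable with $\mathbb{E}(\xi^\eta)=\infty$ for some $\eta<1$. Then for every $p\in[0,1)$, $$\mathbb{P}^\Lambda_p(o\leftrightarrow\infty)=0\quad\text{for }\upsilon_\xi\text{-almost every environment }\Lambda.$$
   Context: Let $\xi$ be a positive random variable and let $\xi_1,\xi_2,\dots$ be i.i.d. copies of $\xi$. Set $x_0=0$ and $x_k=x_{k-1}+\xi_k$ for $k\ge1$, and let $\Lambda=\{x_0,x_1,x_2,\dots\}\subseteq\mathbb{R}$ (the environment); $\upsilon_\xi$ denotes the law of $\Lambda$. Given $\Lambda$, let $\mathcal{L}_\Lambda$ be the graph with vertex set $\{(x_i,n): i\in\mathbb{Z}_+,\ n\in\mathbb{Z}_+\}\subseteq\mathbb{R}^2$ (with $\mathbb{Z}_+=\{0,1,2,\dots\}$) and edge set $\{\{(x_i,n),(x_j,m)\}: |i-j|+|n-m|=1\}$. For $p\in[0,1]$, $\mathbb{P}^\Lambda_p$ is the probability measure on $\{0,1\}^{E(\mathcal{L}_\Lambda)}$ under which the edges are independently open with probability $p_e=p^{|e|}$, where $|e|$ is the Euclidean length of $e$ (so vertical edges have length $1$, and horizontal edges between the $i$-th and $(i+1)$-th column have length $\xi_{i+1}$). Let $o=(0,0)$ and let $\{o\leftrightarrow\infty\}$ be the event that the open cluster of $o$ is infinite. *)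

(* Defs.v *)
From HB Require Import structures.
From mathcomp Require Import all_boot all_order all_algebra.
From mathcomp Require Import all_classical all_reals all_analysis.
Set Implicit Arguments. Unset Strict Implicit. Unset Printing Implicit Defensive.
Import Order.TTheory GRing.Theory Num.Theory.
Local Open Scope classical_set_scope.
Local Open Scope ring_scope.

(* The family (xi k)_{k} (xi k = \xi_{k+1} in the paper) is i.i.d. :
   measurable, identically distributed, mutually independent. *)
Definition iid_seq (R : realType) (d : measure_display) (Omega : measurableType d)
  (Q : probability Omega R) (xi : nat -> Omega -> R) : Prop :=
  [/\ (forall k, measurable_fun setT (xi k)),
      (forall k (B : set R), measurable B ->
         Q (xi k @^-1` B) = Q (xi 0%N @^-1` B)) &
      (forall (s : seq nat) (B : nat -> set R), uniq s ->
         (forall k, measurable (B k)) ->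
         Q [set w | forall k, k \in s -> B k (xi k w)] =
         (\prod_(k <- s) Q (xi k @^-1` B k))%E)].

(* Positions x_i = xi_1 + ... + xi_i of the columns, x_0 = 0. *)
Definition column (R : realType) (xs : nat -> R) (i : nat) : R :=
  \sum_(k < i) xs k.

(* Vertex (i, n) stands for the point (x_i, n).
   Edge (i, n, true)  : horizontal edge {(x_i,n),(x_{i+1},n)};
   Edge (i, n, false) : vertical edge   {(x_i,n),(x_i,n+1)}. *)
Definition vertex := (nat * nat)%type.
Definition edge := (nat * nat * bool)%type.

Definition edge_ends (e : edge) : vertex * vertex :=
  let: (i, n, h) := e in
  if h then ((i, n), (i.+1, n)) else ((i, n), (i, n.+1)).

Definition edge_len (R : realType) (xs : nat -> R) (e : edge) : R :=
  let: (i, n, h) := e in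
  if h then column xs i.+1 - column xs i else 1.

Inductive reach (w : edge -> bool) : vertex -> Prop :=
| reach_o : reach w (0%N, 0%N)
| reach_step (u v : vertex) (e : edge) :
    reach w u -> w e ->
    (edge_ends e = (u, v) \/ edge_ends e = (v, u)) -> reach w v.

Definition perc_event (T : Type) (omega : edge -> T -> bool) : set T :=
  [set t | ~ finite_set (reach (fun e => omega e t))].

(* omega is a family of independent Bernoulli edge variables with
   P(edge e open) = pe e (this determines the law P^Lambda_p). *)
Definition bernoulli_edges (R : realType) (d : measure_display) (T : measurableType d)
  (P : probability T R) (pe : edge -> R) (omega : edge -> T -> bool) : Prop :=
  (forall e, measurable [set t | omega e t]) /\
  (forall (F : seq edge) (b : edge -> bool), uniq F ->
     P [set t | forall e, e \in F -> omega e t = b e] =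
     (\prod_(e <- F) (if b e then pe e else 1 - pe e))%:E).

(* Main.v *)
Require Import Defs.
From HB Require Import structures.
From mathcomp Require Import all_boot all_order all_algebra.
From mathcomp Require Import all_classical all_reals all_analysis.
From mathcomp Require Import ring lra measurable_realfun.
Import Order.TTheory GRing.Theory Num.Theory.
Local Open Scope classical_set_scope.
Local Open Scope ring_scope.
Set Implicit Arguments. Unset Strict Implicit. Unset Printing Implicit Defensive.
Definition nbrs (v : vertex) : seq (edge * vertex) :=
  let: (a, b) := v in
  [:: ((a, b, true), (a.+1, b)); ((a, b, false), (a, b.+1))] ++
  (if a is a'.+1 then [:: ((a', b, true), (a', b))] else [::]) ++
  (if b is b'.+1 then [:: ((a, b', false), (a, b'))] else [::]).

Fixpoint reachn (w : edge -> bool) (n : nat) (v : vertex) : bool :=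
  match n with
  | 0 => v == (0, 0)%N
  | n'.+1 => reachn w n' v || has (fun ev => w ev.1 && reachn w n' ev.2) (nbrs v)
  end.

Lemma nbrs_ends e u v : (e, u) \in nbrs v ->
  edge_ends e = (u, v) \/ edge_ends e = (v, u).
Proof.
case: v => a b; case: a => [|a]; case: b => [|b];
rewrite /nbrs /= !inE;
repeat (case/orP; first by move/eqP=> [-> ->]; (by left) || (by right));
move/eqP=> [-> ->]; (by left) || (by right).
Qed.

Lemma ends_nbrs e u v : edge_ends e = (u, v) \/ edge_ends e = (v, u) ->
  (e, u) \in nbrs v.
Proof.
case: e => [[i n] h]; case: h => /=;
case=> -[<- <-]; rewrite /nbrs !mem_cat !inE ?eqxx //= ?orbT //.
Qed.

Lemma reachnS w n v : reachn w n v -> reachn w n.+1 v.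
Proof. by move=> h /=; rewrite h. Qed.

Lemma reachn_mono w m n v : (m <= n)%N -> reachn w m v -> reachn w n v.
Proof.
move=> /subnK <-; elim: (n - m)%N => [|k IH] //= h.
by rewrite IH.
Qed.

Lemma reachP w v : reach w v <-> exists n, reachn w n v.
Proof.
split.
  elim=> [|u v' e _ [n hn] we hends]; first by exists 0%N.
  exists n.+1 => /=; apply/orP; right; apply/hasP.
  exists (e, u); first exact: ends_nbrs.
  by rewrite /= we hn.
case=> n; elim: n v => [|n IH] v /=.
  by move/eqP ->; apply: reach_o.
case/orP; first exact: IH.
case/hasP=> -[e u] /nbrs_ends hends /= /andP[we hu].
exact: (reach_step (IH _ hu) we hends).
Qed.

Lemma finite_bounded (A : set vertex) : finite_set A ->
  exists M, forall v, A v -> (v.1 + v.2 < M)%N.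
Proof.
move=> /finite_fsetP[F ->].
exists (\max_(x <- finmap.enum_fset F) (x.1 + x.2)).+1 => v /= vF.
by rewrite ltnS (leq_bigmax_seq v vF).
Qed.

Lemma bounded_finite (A : set vertex) M :
  (forall v, A v -> (v.1 + v.2 < M)%N) -> finite_set A.
Proof.
move=> hA; apply: (@sub_finite_set _ _ (`I_M `*` `I_M)).
  move=> [a b] /hA /= h; split => /=; apply: leq_ltn_trans h.
    exact: leq_addr.
  exact: leq_addl.
by apply: finite_setX; apply: finite_II.
Qed.

Lemma infiniteP_far (A : set vertex) :
  ~ finite_set A <-> forall M, exists v, A v /\ (M <= v.1 + v.2)%N.
Proof.
split.
  move=> hinf M; apply: contrapT => hno; apply: hinf.
  apply: (@bounded_finite _ M) => v Av; rewrite ltnNge; apply/negP => hM.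
  by apply: hno; exists v.
move=> hfar /finite_bounded [M hM].
have [v [Av hv]] := hfar M.
by have := hM v Av; rewrite ltnNge hv.
Qed.
Definition covered (i N : nat) (w : edge -> bool) :=
  forall m, (m < N)%N -> exists j, (j <= i)%N /\ w (j, m, false).

Lemma covered_mono i M N w : (M <= N)%N -> covered i N w -> covered i M w.
Proof. by move=> MN h m mM; apply: h; apply: leq_trans MN. Qed.

Lemma reach_key i w v : reach w v ->
  ((v.1 <= i)%N /\ covered i v.2 w) \/
  (exists n, w (i, n, true) /\ covered i n w).
Proof.
elim=> [|u v' e _ IH we hends]; first by left; split => // m.
case: IH => [[ui cu]|]; last by right.
move: hends; case: e we => [[j n] h] we; case: h we => /= we.
- case=> -[hu hv]; subst u v'.
    rewrite leq_eqVlt in ui; case/orP: ui => [/eqP /= ji|ji].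
      by right; exists n; subst i; split.
    by left; split.
  by left; split => //; apply: leq_trans ui; exact: leqnSn.
- case=> -[hu hv]; subst u v'.
    left; split => // m; rewrite ltnS leq_eqVlt => /orP[/eqP->|mn].
      by exists j.
    exact: cu.
  by left; split => //; apply: (covered_mono (leqnSn n)).
Qed.

Lemma perc_cover i N w : ~ finite_set (reach w) ->
  (exists n, (n < N)%N /\ w (i, n, true)) \/ covered i N w.
Proof.
move=> /infiniteP_far far.
have [[n [wn cn]]|hno] :=
  pselect (exists n, w (i, n, true) /\ covered i n w).
  case: (ltnP n N) => nN; first by left; exists n.
  by right; apply: covered_mono cn.
right; have [v [rv hv]] := far (i + N)%N.
case: (reach_key i rv) => [[vi cv]|h]; last by exfalso; apply: hno.
apply: covered_mono cv; rewrite -(leq_add2l i); apply: leq_trans hv _.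
by rewrite leq_add2r.
Qed.
Section Cyl.
Variables (R : realType) (dT : measure_display) (T : measurableType dT).
Variables (P : probability T R) (pe : edge -> R) (omega : edge -> T -> bool).
Hypothesis hb : bernoulli_edges P pe omega.

Lemma set_true : [set t : T | true] = setT.
Proof. by apply/seteqP; split. Qed.
Lemma set_false : [set t : T | false] = set0.
Proof. by apply/seteqP; split. Qed.

Lemma cyl_meas (F : seq edge) (b : edge -> bool) :
  measurable [set t | forall e, e \in F -> omega e t = b e].
Proof.
elim: F => [|e F IH].
  by rewrite (_ : [set t | _] = setT) //; apply/seteqP; split => t //= _ e.
rewrite (_ : [set t | _] = [set t | omega e t = b e] `&`
   [set t | forall e, e \in F -> omega e t = b e]).
  apply: measurableI => //.
  case: (b e).
    by rewrite (_ : [set t | _] = [set t | omega e t]);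
      [exact: hb.1 | apply/seteqP; split => t /=; [move->|move=>->]].
  rewrite (_ : [set t | _] = ~` [set t | omega e t]);
    first exact/measurableC/hb.1.
  by apply/seteqP; split => t /=; [move->|move/negP/negbTE].
apply/seteqP; split => t /=.
  by move=> h; split; [apply: h; rewrite inE eqxx|move=> e' he'; apply: h; rewrite inE he' orbT].
by move=> [h1 h2] e'; rewrite inE => /orP[/eqP->|]; [|apply: h2].
Qed.

Lemma has_meas n (l : seq (edge * vertex)) :
  (forall v, measurable [set t | reachn (fun e => omega e t) n v]) ->
  measurable [set t | has (fun ev => omega ev.1 t && reachn (fun e => omega e t) n ev.2) l].
Proof.
move=> IH; elim: l => [|[e u] l IHl] /=.
  by rewrite set_false.
rewrite (_ : [set t | _] = ([set t | omega e t] `&` [set t | reachn (fun e => omega e t) n u])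
   `|` [set t | has (fun ev => omega ev.1 t && reachn (fun e => omega e t) n ev.2) l]).
  by apply: measurableU => //; apply: measurableI => //; exact: hb.1.
by apply/seteqP; split => t /=; [case/orP => [/andP[]|]; [left|right]|
  case=> [[-> ->]|->] //; rewrite orbT].
Qed.

Lemma reachn_meas n v : measurable [set t | reachn (fun e => omega e t) n v].
Proof.
elim: n v => [|n IH] v /=.
  by case: (v == (0,0)%N); rewrite ?set_true ?set_false.
rewrite (_ : [set t | _] = [set t | reachn (fun e => omega e t) n v] `|`
  [set t | has (fun ev => omega ev.1 t && reachn (fun e => omega e t) n ev.2) (nbrs v)]).
  by apply: measurableU; [exact: IH|exact: has_meas].
by apply/seteqP; split => t /=; [case/orP; [left|right]|case=> ->; rewrite ?orbT].
Qed.

Lemma perc_meas : measurable (perc_event omega).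
Proof.
rewrite (_ : perc_event omega = \bigcap_M \bigcup_k \bigcup_a \bigcup_b
   [set t | (M <= a + b)%N && reachn (fun e => omega e t) k (a, b)]).
  apply: bigcapT_measurable => M; do 3 (apply: bigcupT_measurable => ?).
  case: (M <= _ + _)%N => /=; last by rewrite set_false.
  exact: reachn_meas.
apply/seteqP; split => t /=.
  move/infiniteP_far => h M _; have [[a b] [/reachP[k hk] hv]] := h M.
  by exists k => //; exists a => //; exists b => //=; rewrite hv hk.
move=> h; apply/infiniteP_far => M; have [k _ [a _ [b _ /andP[hv hk]]]] := h M I.
by exists (a, b); split => //; apply/reachP; exists k.
Qed.

Lemma edge_prob e : P [set t | omega e t] = (pe e)%:E.
Proof.
have := hb.2 [:: e] (fun _ => true) erefl; rewrite big_seq1 => <-.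
congr (P _); apply/seteqP; split => t /=.
  by move=> h e'; rewrite inE => /eqP->.
by move=> h; apply: h; rewrite inE.
Qed.

Section Cylf.
Variables (N i : nat).
Implicit Types f : {ffun 'I_N -> 'I_i.+1}.

Definition gf f (m : nat) : nat :=
  oapp (fun m' : 'I_N => nat_of_ord (f m')) 0%N (insub m : option 'I_N).

Lemma gfE f (m : 'I_N) : gf f m = f m.
Proof. by rewrite /gf valK. Qed.

Definition Fs f : seq edge :=
  [seq ((j : nat), nat_of_ord m, false) | m : 'I_N <- enum 'I_N, j : nat <- iota 0 (f m).+1].

Definition bs f (e : edge) : bool := e.1.1 == gf f e.1.2.

Definition Cyl f := [set t | forall e, e \in Fs f -> omega e t = bs f e].

Lemma Fs_uniq f : uniq (Fs f).
Proof.
apply: allpairs_uniq_dep; first exact: enum_uniq.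
  by move=> m _; exact: iota_uniq.
move=> [x1 y1] [x2 y2] _ _ /= [h1 h2].
have e : x2 = x1 by apply: val_inj.
by subst x2 y2.
Qed.

Lemma geo_prod (p : R) (k : nat) :
  \prod_(j <- iota 0 k.+1) (if j == k then p else 1 - p) = (1 - p) ^+ k * p.
Proof.
rewrite -addn1 iotaD big_cat /= big_seq1 add0n eqxx; congr (_ * _).
rewrite -(subn0 k) -/(index_iota 0 k) big_nat_cond.
rewrite (eq_bigr (fun _ => 1 - p)); last first.
  by move=> j /andP[/andP[_ jk] _]; rewrite subn0 (ltn_eqF jk).
by rewrite -big_nat_cond subn0 big_const_nat subn0 -Monoid.iteropE.
Qed.

End Cylf.
Section Cylf2.
Variables (N i : nat) (p : R).
Hypothesis hv : forall j m, pe (j, m, false) = p.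
Implicit Types f : {ffun 'I_N -> 'I_i.+1}.

Lemma Cyl_prob f : P (Cyl f) = (\prod_(m : 'I_N) ((1 - p) ^+ f m * p))%:E.
Proof.
rewrite /Cyl (hb.2 _ _ (Fs_uniq f)); congr (_%:E).
rewrite big_allpairs_dep /= big_enum /=; apply: eq_bigr => m _.
rewrite -(geo_prod p (f m)); apply: eq_bigr => j _.
by rewrite /bs /= gfE hv.
Qed.

Lemma Cyl_cover t : covered i N (fun e => omega e t) -> exists f, Cyl f t.
Proof.
move=> hc.
have hmin : forall m : 'I_N, exists j : 'I_i.+1, omega (nat_of_ord j, nat_of_ord m, false) t &&
   [forall k : 'I_i.+1, (k < j)%N ==> ~~ omega (nat_of_ord k, nat_of_ord m, false) t].
  move=> m; have [j0 [j0i oj0]] := hc m (ltn_ord m).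
  have exP : exists j, (j <= i)%N && omega (j, nat_of_ord m, false) t.
    by exists j0; rewrite j0i oj0.
  case: (ex_minnP exP) => n /andP[ni on] hmn.
  exists (Ordinal (ni : (n < i.+1)%N)) => /=; rewrite on /=.
  apply/forallP => k; apply/implyP => kn; apply/negP => ok.
  have := hmn k; rewrite ok andbT -ltnS ltn_ord => /(_ erefl).
  by rewrite leqNgt kn.
exists [ffun m => xchoose (hmin m)] => e /allpairsPdep[m [j [_ hj ->]]].
rewrite /bs /= gfE ffunE.
have /andP[h1 /forallP h2] := xchooseP (hmin m).
move: hj; rewrite mem_iota leq0n /= add0n ltnS leq_eqVlt ffunE => /orP[/eqP->|jlt].
  by rewrite eqxx.
rewrite (ltn_eqF jlt).
have ji : (j < i.+1)%N by apply: ltn_trans jlt (ltn_ord _).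
by have := h2 (Ordinal ji); rewrite /= jlt /= => /negbTE.
Qed.

End Cylf2.
Lemma sub_fin (I : finType) (A : set T) (F : I -> set T) :
  measurable A -> (forall x, measurable (F x)) -> A `<=` \bigcup_x F x ->
  (P A <= \sum_(x : I) P (F x))%E.
Proof.
move=> mA mF hA; set s := [seq F x | x <- enum I].
have -> : (\sum_(x : I) P (F x) = \sum_(k < size s) P (nth set0 s k))%E.
  rewrite -big_enum /= -(big_map F xpredT P) -/s (big_nth set0) big_mkord.
  by [].
apply: content_subadditive => //.
  move=> k /= ks; have : nth set0 s k \in s by exact: mem_nth.
  by case/mapP => x _ ->.
rewrite -bigcup_mkord => t /hA [x _ Fx].
have xi : (index x (enum I) < size s)%N.
  by rewrite size_map index_mem mem_enum.
exists (index x (enum I)) => //=.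
by rewrite (nth_map x) ?nth_index ?mem_enum // -(size_map F).
Qed.

Lemma geo_sum (p : R) (k : nat) :
  \sum_(j < k) (1 - p) ^+ j * p = 1 - (1 - p) ^+ k.
Proof.
elim: k => [|k IH]; first by rewrite big_ord0 expr0 subrr.
rewrite big_ord_recr /= IH exprSr; ring.
Qed.

Lemma perc_bound (N i : nat) (p ph : R) :
  (forall j m, pe (j, m, false) = p) -> (forall n, pe (i, n, true) = ph) ->
  (P (perc_event omega) <= (N%:R * ph + (1 - (1 - p) ^+ i.+1) ^+ N)%:E)%E.
Proof.
move=> hv hh.
pose F (x : ('I_N + {ffun 'I_N -> 'I_i.+1})%type) : set T :=
  match x with inl n => [set t | omega (i, nat_of_ord n, true) t] | inr f => Cyl f end.
apply: (le_trans (@sub_fin _ _ F (perc_meas) _ _)).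
- by case=> [n|f] /=; [exact: hb.1|exact: cyl_meas].
- move=> t /= /(perc_cover i N) [[n [nN on]]|/(Cyl_cover) [f hf]].
    by exists (inl (Ordinal nN)).
  by exists (inr f).
rewrite big_sumType /= EFinD le_eqVlt; apply/orP; left; apply/eqP; congr (_ + _)%E.
  under eq_bigr do rewrite edge_prob hh.
  by rewrite sumEFin sumr_const card_ord mulr_natl.
under eq_bigr do rewrite (Cyl_prob hv).
rewrite sumEFin -(bigA_distr_bigA (fun (m : 'I_N) (j : 'I_i.+1) => (1 - p) ^+ j * p)) /=.
by rewrite prodr_const card_ord geo_sum.
Qed.
End Cyl.
Section Det.
Variable R : realType.

Lemma bern_ineq (h : R) n : 0 <= h -> 1 + n%:R * h <= (1 + h) ^+ n.
Proof.
move=> h0; elim: n => [|n IH]; first by rewrite mul0r addr0 expr0.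
rewrite exprS -natr1.
have hn : 0 <= n%:R * h by apply: mulr_ge0.
nra.
Qed.

Lemma pow_small (u : R) N : 0 <= u <= 1 -> (1 - u) ^+ N * (1 + N%:R * u) <= 1.
Proof.
case/andP=> u0 u1.
apply: (le_trans (y := (1 - u) ^+ N * (1 + u) ^+ N)).
  apply: ler_wpM2l; first by apply: exprn_ge0; lra.
  exact: bern_ineq.
rewrite -exprMn; apply: exprn_ile1; nra.
Qed.

Lemma a_pow_small (a : R) : 0 < a < 1 -> forall d, 0 < d ->
  exists n0, forall n, (n0 <= n)%N -> a ^+ n <= d.
Proof.
case/andP=> a0 a1 d d0.
set h := a^-1 - 1.
have h0 : 0 < h by rewrite /h subr_gt0 invf_gt1.
have ah : a * (1 + h) = 1 by rewrite /h addrC subrK mulfV // gt_eqF.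
have hb : 0 <= (d * h)^-1 by rewrite invr_ge0; apply: mulr_ge0; lra.
exists (Num.bound (d * h)^-1) => n hn.
have hn' : (d * h)^-1 < n%:R.
  apply: lt_le_trans (archi_boundP hb) _; by rewrite ler_nat.
have an0 : 0 <= a ^+ n by apply: exprn_ge0; lra.
have e0 : a ^+ n * (1 + h) ^+ n = 1 by rewrite -exprMn ah expr1n.
have e1 : a ^+ n * (1 + n%:R * h) <= 1.
  rewrite -[leRHS]e0; apply: ler_wpM2l => //; apply: bern_ineq; lra.
have dh0 : 0 < d * h by apply: mulr_gt0.
have e2 : 1 < n%:R * (d * h).
  by rewrite -[ltLHS](mulVf (lt0r_neq0 dh0)) ltr_pM2r.
have e3 : 0 <= d * a ^+ n by apply: mulr_ge0 => //; lra.
nra.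
Qed.

End Det.
Lemma edge_len_h (R : realType) (xs : nat -> R) i n : edge_len xs (i, n, true) = xs i.
Proof. rewrite /= /column big_ord_recr /=; ring. Qed.

Lemma det_main (R : realType) (p : R) (xs : nat -> R) :
  0 <= p < 1 -> (forall k, 0 < xs k) ->
  (0 < p -> forall k, exists2 i, (k <= i)%N & (2 * ln (1 - p) / ln p) * (i.+1)%:R <= xs i) ->
  forall (dT : measure_display) (T : measurableType dT) (P : probability T R) omega,
   bernoulli_edges P (fun e => p `^ edge_len xs e) omega -> P (perc_event omega) = 0%E.
Proof.
case/andP=> p0 p1 xpos hio dT T P omega hb.
have B N i := @perc_bound R dT T P _ omega hb N i p (p `^ xs i)
  (fun j m => powRr1 p0) (fun n => congr1 _ (edge_len_h xs i n)).
apply/eqP; rewrite eq_le measure_ge0 andbT.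
have [p00|pp] := eqVneq p 0.
  have := B 1%N 0%N; rewrite p00 powR0 ?gt_eqF // subr0 !expr1 subrr.
  by rewrite mulr0 add0r.
have {pp} pp : 0 < p by rewrite lt_neqAle eq_sym pp.
apply/lee_addgt0Pr => eps heps; rewrite add0e.
set a := 1 - p.
have a0 : 0 < a by rewrite /a subr_gt0.
have a1 : a < 1 by rewrite /a; lra.
have lna : ln a < 0 by apply: ln_lt0; rewrite a0 a1.
have lnp : ln p < 0 by apply: ln_lt0; rewrite pp p1.
set c := 2 * ln a / ln p.
have pc : p `^ c = a ^+ 2.
  rewrite /powR (gt_eqF pp) /c divfK; last by rewrite lt_eqF.
  by rewrite -powR_mulrn ?ltW // /powR (gt_eqF a0).
have eps2 : 0 < eps / 2 by apply: divr_gt0.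
set K := Num.bound (2 / eps).
have hK : 2 / eps < K%:R by apply: archi_boundP; apply: ltW; apply: divr_gt0.
set d := eps / 2 / (K%:R + 1).
have d0 : 0 < d by apply: divr_gt0 => //; rewrite ltr_wpDl.
have ha : 0 < a < 1 by rewrite a0 a1.
have [i0 hi0] := a_pow_small ha d0.
have [i hi hci] := hio pp i0.
set u := a ^+ i.+1.
have u0 : 0 < u by apply: exprn_gt0.
have ud : u <= d by apply: hi0; apply: leq_trans hi (leqnSn _).
have u1 : u <= 1 by apply: exprn_ile1; lra.
set N := (Num.truncn (K%:R / u)).+1.
have hN1 : K%:R / u < N%:R by apply: truncnS_gt.
have hN2 : N%:R <= K%:R / u + 1.
  by rewrite /N -natr1 lerD2r truncn_le divr_ge0 // ltW.
have Nu1 : K%:R < N%:R * u by rewrite -ltr_pdivrMr.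
have Nu2 : N%:R * u <= K%:R + 1.
  apply: le_trans (ler_wpM2r (ltW u0) hN2) _.
  by rewrite mulrDl divfK ?gt_eqF // mul1r lerD2l.
have hpx : p `^ xs i <= u ^+ 2.
  apply: le_trans (ger_powR _ hci) _; first by rewrite pp (ltW p1).
  rewrite -/a -/c powRrM pc powR_mulrn; last by apply: exprn_ge0; apply: ltW.
  by rewrite /u exprAC.
apply: le_trans (B N i) _; rewrite lee_fin -/a -/u.
have f1 : N%:R * p `^ xs i <= eps / 2.
  have hd : d * (K%:R + 1) = eps / 2 by rewrite /d divfK // gt_eqF // ltr_wpDl.
  have h1 : N%:R * p `^ xs i <= N%:R * u ^+ 2 by apply: ler_wpM2l.
  have h2 : 0 <= N%:R :> R by [].
  have h3 : 0 <= K%:R :> R by [].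
  nra.
have f2 : (1 - u) ^+ N <= eps / 2.
  have X0 : 0 <= (1 - u) ^+ N by apply: exprn_ge0; lra.
  have hX := pow_small N (_ : 0 <= u <= 1).
  have {hX} hX := hX ltac:(by rewrite ltW). 
  have hz : (2 / eps) * (eps / 2) = 1.
    by rewrite mulrA divfK ?gt_eqF // mulfV.
  have hXz : (1 - u) ^+ N * (2 / eps) <= 1 by nra.
  set X := (1 - u) ^+ N in X0 hX hXz *.
  have -> : X = X * (2 / eps) * (eps / 2) by rewrite -mulrA hz mulr1.
  by rewrite -[leRHS]mul1r; apply: ler_wpM2r => //; lra.
lra.
Qed.
Section Env.
Variables (R : realType) (d : measure_display) (Omega : measurableType d).
Variables (Q : probability Omega R) (xi : nat -> Omega -> R).
Hypothesis hiid : iid_seq Q xi.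
Hypothesis xpos : forall k w, 0 < xi k w.
Variable c : R.
Hypothesis c0 : 0 < c.

Lemma hmeas k : measurable_fun setT (xi k).
Proof. by case: hiid. Qed.

Definition Ev k n := [set w | c * n.+1%:R <= xi k w].

Lemma Ev_meas k n : measurable (Ev k n).
Proof.
rewrite (_ : Ev k n = xi k @^-1` `[c * n.+1%:R, +oo[%classic).
  by rewrite -[_ @^-1` _]setTI; apply: (hmeas k measurableT); exact: measurable_itv.
by apply/seteqP; split => w /=; rewrite in_itv /= andbT.
Qed.

Definition rr n := fine (Q (Ev 0 n)).

Lemma Q_Ev n : Q (Ev 0 n) = (rr n)%:E.
Proof.
rewrite /rr fineK // ge0_fin_numE ?measure_ge0 //.
by apply: (le_lt_trans (probability_le1 _ (Ev_meas 0 n))); exact: ltry.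
Qed.

Lemma rr_ge0 n : 0 <= rr n.
Proof. by rewrite -lee_fin -Q_Ev measure_ge0. Qed.

Lemma rr_le1 n : rr n <= 1.
Proof. by rewrite -lee_fin -Q_Ev; apply: probability_le1; exact: Ev_meas. Qed.

Lemma powR_le1x (x eta : R) : 0 < x -> 0 <= eta <= 1 -> x `^ eta <= 1 + x.
Proof.
move=> x0 /andP[e0 e1]; have [x1|x1] := lerP x 1.
  apply: le_trans (ger_powR _ e0) _; first by rewrite x0 x1.
  by rewrite powRr0 lerDl ltW.
by apply: le_trans (ler1_powR (ltW x1) e1) _; rewrite lerDr.
Qed.

Lemma pointwise (eta : R) w : 0 <= eta <= 1 ->
  ((xi 0 w `^ eta)%:E <= (1 + c)%:E + \sum_(n <oo) (c * \1_(Ev 0 n) w)%:E)%E.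
Proof.
move=> he; set x := xi 0 w.
have x0 : 0 < x := xpos 0 w.
set K := Num.truncn (x / c).
have hK1 : K%:R <= x / c by rewrite truncn_le divr_ge0 // ltW.
have hK2 : x / c < K.+1%:R by apply: truncnS_gt.
have hs : ((K%:R * c)%:E <= \sum_(n <oo) (c * \1_(Ev 0 n) w)%:E)%E.
  apply: le_trans (nneseries_lim_ge (P := xpredT) K _); last first.
    by move=> n _ _; rewrite lee_fin mulr_ge0 // ?ltW // indicE.
  rewrite big_mkord (eq_bigr (fun _ => c%:E)).
    by rewrite sumEFin sumr_const card_ord mulrC mulr_natr.
  move=> n _; rewrite indicE mem_set ?mulr1 //.
  rewrite /Ev /= -/x; apply: le_trans (_ : c * K%:R <= x).
    by rewrite ler_pM2l // ler_nat.
  by rewrite mulrC -ler_pdivlMr.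
apply: (@le_trans _ _ ((1 + c)%:E + (K%:R * c)%:E)%E); last exact: leeD2l.
rewrite -EFinD lee_fin.
apply: le_trans (powR_le1x x0 he) _.
have : x < K.+1%:R * c by rewrite -ltr_pdivrMr.
rewrite -natr1; lra.
Qed.

Lemma series_le_bound (u : nat -> R) M : (forall n, 0 <= u n) ->
  (forall K, \sum_(n < K) u n <= M) -> (\sum_(n <oo) (u n)%:E <= M%:E)%E.
Proof.
move=> u0 hb; apply: lime_le.
  by apply: is_cvg_nneseries => n _ _; rewrite lee_fin.
by apply: nearW => n /=; rewrite sumEFin lee_fin big_mkord.
Qed.

Lemma rr_unbounded (eta : R) : 0 < eta < 1 ->
  (\int[Q]_w ((xi 0%N w) `^ eta)%:E = +oo)%E ->
  forall M, exists K, M < \sum_(n < K) rr n.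
Proof.
move=> /andP[e0 e1] hinf M; apply: contrapT => hno.
have hb : forall K, \sum_(n < K) rr n <= M.
  by move=> K; rewrite leNgt; apply/negP => h; apply: hno; exists K.
have hser := series_le_bound rr_ge0 hb.
have he : 0 <= eta <= 1 by rewrite !ltW.
have mS : measurable_fun (T:=Omega) (U:=\bar R) setT (fun w => (\sum_(n <oo) (c * \1_(Ev 0 n) w)%:E)%E).
  apply: (ge0_emeasurable_sum (P := xpredT)).
    by move=> k x _ _; rewrite lee_fin mulr_ge0 // ?ltW // indicE.
  move=> k _; apply/measurable_EFinP; apply: measurable_funM => //.
  exact/measurable_indic/Ev_meas.
have S0 : forall w, (0 <= \sum_(n <oo) (c * \1_(Ev 0 n) w)%:E)%E.
  by move=> w; apply: nneseries_ge0 => n _ _; rewrite lee_fin mulr_ge0 // ?ltW // indicE.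
have hint : (\int[Q]_w ((xi 0%N w) `^ eta)%:E <= (1 + c)%:E + c%:E * M%:E)%E.
  apply: le_trans (ge0_le_integral _ measurableT _ _ _ (fun w _ => pointwise w he)) _.
  - by move=> w _; rewrite lee_fin powR_ge0.
  - apply/measurable_EFinP; apply: measurableT_comp (measurable_powR eta) _.
    exact: hmeas.
  - by apply: emeasurable_funD; [exact: (@measurable_cst _ _ _ _ setT ((1+c)%:E)) | exact: mS].
  rewrite ge0_integralD //; last by move=> w _; rewrite lee_fin addr_ge0 // ltW.
  rewrite integral_cst // [X in (_ * X)%E]probability_setT mule1 leeD2l //.
  rewrite integral_nneseries //; last first.
    by move=> n w _; rewrite lee_fin mulr_ge0 // ?ltW // indicE.
    move=> n; apply/measurable_EFinP; apply: measurable_funM => //.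
    exact/measurable_indic/Ev_meas.
  have hI : forall n, (\int[Q]_x (c * \1_(Ev 0 n) x)%:E = c%:E * (rr n)%:E)%E.
    move=> n; rewrite (integralZl_indic (m:=Q) (D:=setT) measurableT
      (fun _ => Ev 0 n)).
    - rewrite integral_indic ?setIT; [|exact: measurableT|exact: Ev_meas].
      by rewrite [X in (_ * X)%E]Q_Ev.
    - by move=> /(lt_trans c0); rewrite ltxx.
    - exact: Ev_meas.
  rewrite (eq_eseriesr (fun n _ => hI n)) nneseriesZl; last first.
    by move=> n _; rewrite lee_fin rr_ge0.
  by apply: lee_wpmul2l => //; rewrite lee_fin ltW.
move: hint; rewrite hinf leye_eq => /eqP.
by rewrite -EFinM -EFinD.
Qed.

Lemma prod_sum_bound (l : seq nat) (f : nat -> R) :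
  (forall i, 0 <= f i <= 1) ->
  (\prod_(i <- l) (1 - f i)) * (1 + \sum_(i <- l) f i) <= 1.
Proof.
move=> hf; elim: l => [|a l IH]; first by rewrite !big_nil addr0 mulr1.
rewrite !big_cons.
have P0 : 0 <= \prod_(i <- l) (1 - f i).
  by apply: prodr_ge0 => i _; have := hf i; lra.
have P1 : \prod_(i <- l) (1 - f i) <= 1.
  by apply: prodr_ile1 => i _; have := hf i; lra.
have S0 : 0 <= \sum_(i <- l) f i by apply: sumr_ge0 => i _; have := hf i; lra.
move: IH P0 P1 S0 (hf a); set y := f a; set P := \prod_(i <- l) _; set S := \sum_(i <- l) _.
move=> IH P0 P1 S0.
move=> /andP[y0 y1].
have h1 : 0 <= (1 - y) * (1 - P * (1 + S)) by apply: mulr_ge0; lra.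
have h2 : 0 <= (1 - y) * y * (1 - P) by apply: mulr_ge0; [apply: mulr_ge0|]; lra.
have h3 : 0 <= y * y by apply: mulr_ge0.
nra.
Qed.

Definition Gk k := [set w | forall i, (k <= i)%N -> xi i w < c * i.+1%:R].

Lemma Gk_meas k : measurable (Gk k).
Proof.
rewrite (_ : Gk k = \bigcap_i [set w | (k <= i)%N -> xi i w < c * i.+1%:R]).
  apply: bigcapT_measurable => i; case: (k <= i)%N.
    rewrite (_ : [set w | _] = ~` Ev i i); first exact/measurableC/Ev_meas.
    by apply/seteqP; split => w /=; [move=> /(_ erefl); rewrite ltNge => /negP|
      move=> /negP; rewrite -ltNge => h _].
  by rewrite (_ : [set w | _] = setT) //; apply/seteqP; split.
by apply/seteqP; split => w /= h i; [move=> _; exact: h|exact: h].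
Qed.

Definition Bi i : set R := `]-oo, c * i.+1%:R[%classic.

Lemma cylQ (s : seq nat) : uniq s ->
  Q [set w | forall i, i \in s -> Bi i (xi i w)] = (\prod_(i <- s) (1 - rr i))%:E.
Proof.
move=> us; case: hiid => _ hid hind.
rewrite hind //; last by move=> i; exact: measurable_itv.
rewrite -prodEFin; apply: eq_bigr => i _.
rewrite hid; last exact: measurable_itv.
rewrite (_ : xi 0 @^-1` Bi i = ~` Ev 0 i).
  by rewrite probability_setC ?Q_Ev //; exact: Ev_meas.
apply/seteqP; split => w /=; rewrite /Bi /= in_itv /=.
  by rewrite ltNge => /negP.
by move=> /negP; rewrite -ltNge.
Qed.

Lemma cyl_meas2 (s : seq nat) :
  measurable [set w | forall i, i \in s -> Bi i (xi i w)].
Proof.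
rewrite (_ : [set w | _] = \bigcap_i [set w | i \in s -> Bi i (xi i w)]).
  apply: bigcapT_measurable => i; case: (i \in s).
    rewrite (_ : [set w | _] = xi i @^-1` Bi i).
      rewrite -[_ @^-1` _]setTI; apply: (hmeas i measurableT).
      exact: measurable_itv.
    by apply/seteqP; split => w /=; [move=> /(_ erefl)|move=> h _].
  by rewrite (_ : [set w | _] = setT) //; apply/seteqP; split.
by apply/seteqP; split => w /= h i; [move=> _; exact: h|exact: h].
Qed.

Lemma Gk_null (eta : R) : 0 < eta < 1 ->
  (\int[Q]_w ((xi 0%N w) `^ eta)%:E = +oo)%E -> forall k, Q (Gk k) = 0%E.
Proof.
move=> he hinf k; apply/eqP; rewrite eq_le measure_ge0 andbT.
apply/lee_addgt0Pr => e e0; rewrite add0e.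
have [K hK] := rr_unbounded he hinf (e^-1 + k%:R).
have hsumk : \sum_(i < k) rr i <= k%:R.
  have : \sum_(i < k) rr i <= \sum_(i < k) 1 by apply: ler_sum => i _; exact: rr_le1.
  by rewrite sumr_const card_ord.
have kK : (k <= K)%N.
  have : \sum_(i < K) rr i <= K%:R.
    have : \sum_(i < K) rr i <= \sum_(i < K) 1 by apply: ler_sum => i _; exact: rr_le1.
    by rewrite sumr_const card_ord.
  move=> hKK; rewrite -(ler_nat R); apply: ltW; apply: (le_lt_trans _ (lt_le_trans hK hKK)).
  by rewrite lerDr invr_ge0 ltW.
set s := index_iota k K.
have hS : e^-1 < \sum_(i <- s) rr i.
  have := hK; rewrite -(big_mkord xpredT) (big_cat_nat (leq0n k) kK) /= big_mkord.
  rewrite -/s; lra.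
have hf : forall i, 0 <= rr i <= 1 by move=> i; rewrite rr_ge0 rr_le1.
have hP := prod_sum_bound s hf.
have P0 : 0 <= \prod_(i <- s) (1 - rr i).
  by apply: prodr_ge0 => i _; have := hf i; lra.
have hee : e^-1 * e = 1 by rewrite mulVf // gt_eqF.
have hPe : \prod_(i <- s) (1 - rr i) <= e.
  move: hP hS P0 hee; set P := \prod_(i <- s) _; set S := \sum_(i <- s) _.
  move=> hP hS P0 hee.
  have hi0 : 0 <= e^-1 by rewrite invr_ge0 ltW.
  nra.
apply: (le_trans (y := Q [set w | forall i, i \in s -> Bi i (xi i w)])).
  apply: le_measure; rewrite ?inE; [exact: Gk_meas|exact: cyl_meas2|].
  move=> w hw i; rewrite mem_index_iota => /andP[ki _].
  by rewrite /Bi /= in_itv /=; apply: hw.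
by rewrite cylQ ?iota_uniq // lee_fin.
Qed.
Lemma ae_good (eta : R) : 0 < eta < 1 ->
  (\int[Q]_w ((xi 0%N w) `^ eta)%:E = +oo)%E ->
  {ae Q, forall w, forall k, exists2 i, (k <= i)%N & c * i.+1%:R <= xi i w}.
Proof.
move=> he hinf.
have hneg : Q.-negligible (\bigcup_k Gk k).
  apply: negligible_bigcup => k; apply/negligibleP; first exact: Gk_meas.
  exact: Gk_null he hinf k.
apply: (negligibleS _ hneg) => w /= hw.
apply: contrapT => hno; apply: hw => k.
apply: contrapT => hk; apply: hno; exists k => // i ki.
rewrite ltNge; apply/negP => h; apply: hk; by exists i.
Qed.
End Env.
Theorem theorem1p2 (R : realType) (d : measure_display) (Omega : measurableType d)
  (Q : probability Omega R) (xi : nat -> Omega -> R) :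
  iid_seq Q xi ->
  (forall k w, 0 < xi k w) ->
  (exists eta : R, 0 < eta < 1 /\
     (\int[Q]_w ((xi 0%N w) `^ eta)%:E = +oo)%E) ->
  forall p : R, 0 <= p < 1 ->
  {ae Q, forall w,
     forall (dT : measure_display) (T : measurableType dT)
            (P : probability T R) (omega : edge -> T -> bool),
       bernoulli_edges P (fun e => p `^ edge_len (fun k => xi k w) e) omega ->
       P (perc_event omega) = 0%E}.
Proof.
move=> hiid xpos [eta [he hinf]] p hp.
have [p00|pp] := eqVneq p 0.
  apply: (negligibleS _ (negligible_set0 Q)) => w /= hw; apply: hw.
  move=> dT T P omega hb; apply: (det_main hp (xpos^~ w) _ hb).
  by rewrite p00 ltxx.
have p0 : 0 < p by rewrite lt_neqAle eq_sym pp; case/andP: hp.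
have p1 : p < 1 by case/andP: hp.
set c := 2 * ln (1 - p) / ln p.
have c0 : 0 < c.
  have la : ln (1 - p) < 0 by apply: ln_lt0; apply/andP; split; lra.
  have lp : ln p < 0 by apply: ln_lt0; rewrite p0 p1.
  have := mulr_gt0 (_ : 0 < - (2 * ln (1 - p))) (_ : 0 < - (ln p)^-1).
  rewrite mulrNN; apply; first by rewrite oppr_gt0; lra.
  by rewrite oppr_gt0 invr_lt0.
have hae := ae_good hiid xpos c0 he hinf.
apply: (negligibleS _ hae) => w /= hw hgood; apply: hw.
move=> dT T P omega hb; apply: (det_main hp (xpos^~ w) _ hb).
by move=> _; exact: hgood.
Qed.
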